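(* Let $q$ be a prime power and $m$ a positive integer. For $i\in\{1,2\}$ let $V_i=\mathbb F_{q^m}^{k_i}$ and let $U_i\subseteq V_i$ be a cutting $[n_i,k_i]_{q^m/q}$ system which is $(k_i-1,\,n_i-m-1+t_i)_q$-evasive, where $t_1,t_2\ge 0$ are integers with $t_1+t_2<m+2$. Then $U_1\oplus U_2\subseteq V_1\oplus V_2$ is a cutting $[n_1+n_2,\,k_1+k_2]_{q^m/q}$ system.
   Context: An $[n,k]_{q^m/q}$ system is an $\mathbb F_q$-subspace $U$ of $\mathbb F_{q^m}^k$ with $\dim_{\mathbb F_q}(U)=n$ and $\langle U\rangle_{\mathbb F_{q^m}}=\mathbb F_{q^m}^k$. It is cutting if for every $\mathbb F_{q^m}$-hyperplane $H$ one has $\langle H\cap U\rangle_{\mathbb F_{q^m}}=H$. It is $(h,r)_q$-evasive if $\dim_{\mathbb F_q}(U\cap H)\le r$ for every $h$-dimensional $\mathbb F_{q^m}$-subspace $H$. *)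

(* Defs.v *)
From HB Require Import structures.
From mathcomp Require Import all_boot all_order all_algebra all_field.
Set Implicit Arguments. Unset Strict Implicit. Unset Printing Implicit Defensive.
Import GRing.Theory Num.Theory.
Local Open Scope ring_scope.

(* Setting: F = F_q a finite field, L = F_{q^m} a finite extension of F,
   m = \dim_F L.  The ambient space F_{q^m}^k is {ffun 'I_k -> L}, which
   carries two vector-space structures on the same carrier:
   - VF k := {ffun 'I_k -> L}   : F-vector space (F_q-subspaces),
   - VL k := {ffun 'I_k -> L^o} : L-vector space (F_{q^m}-subspaces). *)

Section Systems.
Variables (F : finFieldType) (L : fieldExtType F).

Definition VF (k : nat) := {ffun 'I_k -> L}.
Definition VL (k : nat) := {ffun 'I_k -> L^o}.

Definition toL k (v : VF k) : VL k := [ffun i => (v i : L^o)].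

Definition is_Lspan k (S : VF k -> Prop) (W : {vspace VL k}) :=
  (forall v, S v -> toL v \in W) /\
  (forall W' : {vspace VL k}, (forall v, S v -> toL v \in W') -> (W <= W')%VS).

Definition is_system k n (U : {vspace VF k}) :=
  \dim U = n /\ is_Lspan (fun v => v \in U) fullv.

Definition Lhyperplane k (H : {vspace VL k}) := (\dim H).+1 = k.

Definition cutting k (U : {vspace VF k}) :=
  forall H : {vspace VL k}, Lhyperplane H ->
    is_Lspan (fun v => v \in U /\ toL v \in H) H.

(* dim_{F_q}(U ∩ H) <= r : the F_q-subspace U ∩ H has dimension <= r,
   i.e. every F_q-subspace contained in U ∩ H has dimension <= r. *)
Definition Fdim_cap_le k (U : {vspace VF k}) (H : {vspace VL k}) (r : int) :=
  forall S : {vspace VF k}, (S <= U)%VS -> (forall v, v \in S -> toL v \in H) ->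
    ((\dim S)%:Z <= r)%R.

Definition evasive k (U : {vspace VF k}) (h : nat) (r : int) :=
  forall H : {vspace VL k}, \dim H = h -> Fdim_cap_le U H r.

Definition inl_vec k1 k2 (v : VF k1) : VF (k1 + k2) :=
  [ffun i => match split i with inl j => v j | inr _ => 0 end].
Definition inr_vec k1 k2 (v : VF k2) : VF (k1 + k2) :=
  [ffun i => match split i with inl _ => 0 | inr j => v j end].

Definition dsum k1 k2 (U1 : {vspace VF k1}) (U2 : {vspace VF k2})
  : {vspace VF (k1 + k2)} :=
  (linfun (@inl_vec k1 k2) @: U1 + linfun (@inr_vec k1 k2) @: U2)%VS.

End Systems.

(* Main.v *)
Require Import Defs.
From HB Require Import structures.
From mathcomp Require Import all_boot all_order all_algebra all_field zify.
Set Implicit Arguments. Unset Strict Implicit. Unset Printing Implicit Defensive.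
Import GRing.Theory Num.Theory.
Local Open Scope ring_scope.

Section LinfunGen.
Variables (K : fieldType) (aT rT : vectType K) (f : aT -> rT).
Hypothesis lf : linear f.
HB.instance Definition _ := GRing.isLinear.Build K aT rT *:%R f lf.
Lemma linfunE' : linfun f =1 f. Proof. exact: lfunE. Qed.
End LinfunGen.

Section Aux.
Variables (F : finFieldType) (L : fieldExtType F).

Lemma dimVL k : \dim (fullv : {vspace VL L k}) = k.
Proof. by rewrite dimvf /dim /= card_ord muln1. Qed.

Lemma dimLo : \dim (fullv : {vspace L^o}) = 1%N.
Proof. by rewrite dimvf /dim. Qed.

Definition inlL k1 k2 (x : VL L k1) : VL L (k1 + k2) :=
  [ffun i => match split i with inl j => x j | inr _ => 0 end].
Definition inrL k1 k2 (x : VL L k2) : VL L (k1 + k2) :=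
  [ffun i => match split i with inl _ => 0 | inr j => x j end].
Definition p1 k1 k2 (x : VL L (k1 + k2)) : VL L k1 := [ffun j => x (lshift k2 j)].
Definition p2 k1 k2 (x : VL L (k1 + k2)) : VL L k2 := [ffun j => x (rshift k1 j)].

Lemma toL_inl k1 k2 (v : VF L k1) : toL (inl_vec k2 v) = inlL k2 (toL v).
Proof. by apply/ffunP => i; rewrite !ffunE; case: split => j //; rewrite ffunE. Qed.
Lemma toL_inr k1 k2 (v : VF L k2) : toL (inr_vec k1 v) = inrL k1 (toL v).
Proof. by apply/ffunP => i; rewrite !ffunE; case: split => j //; rewrite ffunE. Qed.
Lemma toLD k (u v : VF L k) : toL (u + v) = toL u + toL v.
Proof. by apply/ffunP => i; rewrite !ffunE. Qed.
Lemma toLN k (u : VF L k) : toL (- u) = - toL u.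
Proof. by apply/ffunP => i; rewrite !ffunE. Qed.
Lemma toLB k (u v : VF L k) : toL (u - v) = toL u - toL v.
Proof. by rewrite toLD toLN. Qed.
Lemma toLZ k (a : F) (u : VF L k) : toL (a *: u) = a%:A *: toL u.
Proof. apply/ffunP => i; rewrite !ffunE /=. by rewrite -[in LHS]mulr_algl. Qed.

Lemma lin_inl k1 k2 : linear (@inl_vec F L k1 k2).
Proof.
move=> a u v; apply/ffunP => i; rewrite !ffunE.
by case: split => j; rewrite ?ffunE // scaler0 addr0.
Qed.
Lemma lin_inr k1 k2 : linear (@inr_vec F L k1 k2).
Proof.
move=> a u v; apply/ffunP => i; rewrite !ffunE.
by case: split => j; rewrite ?ffunE // scaler0 addr0.
Qed.
Lemma lin_inlL k1 k2 : linear (@inlL k1 k2).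
Proof.
move=> a u v; apply/ffunP => i; rewrite !ffunE.
by case: split => j; rewrite ?ffunE // scaler0 addr0.
Qed.
Lemma lin_inrL k1 k2 : linear (@inrL k1 k2).
Proof.
move=> a u v; apply/ffunP => i; rewrite !ffunE.
by case: split => j; rewrite ?ffunE // scaler0 addr0.
Qed.

Lemma decompL k1 k2 (x : VL L (k1 + k2)) : x = inlL k2 (p1 x) + inrL k1 (p2 x).
Proof.
apply/ffunP => i; rewrite !ffunE; case: splitP => j ij; rewrite ffunE.
  by rewrite addr0; congr (x _); apply: val_inj.
by rewrite add0r; congr (x _); apply: val_inj.
Qed.

Lemma inl_lshift k1 k2 (v : VF L k1) j : inl_vec k2 v (lshift k2 j) = v j.
Proof. by rewrite ffunE (unsplitK (inl _ j)). Qed.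
Lemma inr_lshift k1 k2 (v : VF L k2) j : inr_vec k1 v (lshift k2 j) = 0.
Proof. by rewrite ffunE (unsplitK (inl _ j)). Qed.
Lemma inl_rshift k1 k2 (v : VF L k1) j : inl_vec k2 v (rshift k1 j) = 0.
Proof. by rewrite ffunE (unsplitK (inr _ j)). Qed.
Lemma inr_rshift k1 k2 (v : VF L k2) j : inr_vec k1 v (rshift k1 j) = v j.
Proof. by rewrite ffunE (unsplitK (inr _ j)). Qed.

Lemma functional k (H : {vspace VL L k}) : (\dim H).+1 = k ->
  exists f : VL L k -> L^o, linear f /\ forall x, (f x == 0) = (x \in H).
Proof.
move=> hH.
set e := vpick (H^C)%VS.
have dC : \dim (H^C)%VS = 1%N by rewrite dimv_compl dimVL; lia.
have e0 : e != 0 by rewrite vpick0 -dimv_eq0 dC.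
have HCe : (H^C)%VS = <[e]>%VS.
  by apply/eqP; rewrite eq_sym eqEdim dC dim_vline e0 /= andbT -memvE memv_pick.
exists (fun x => coord [tuple e] 0 (x - projv H x)); split.
  move=> a u v /=.
  have -> : a *: u + v - projv H (a *: u + v) = a *: (u - projv H u) + (v - projv H v).
    by rewrite linearP /= scalerBr; rewrite addrACA opprD.
  by rewrite linearP.
move=> x.
have xC : x - projv H x \in <<[tuple e]>>%VS by rewrite /= span_seq1 -HCe memv_projC.
apply/eqP/idP => [c0|xH].
  have := coord_span xC; rewrite big_ord1 c0 scale0r => /eqP; rewrite subr_eq0 => /eqP ->.
  exact: memv_proj.
by rewrite projv_id // subrr linear0.
Qed.


Lemma hyper k' (g : 'Hom(VL L k', L^o)) : lker g != fullv -> (\dim (lker g)).+1 = k'.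
Proof.
move=> gnz.
have := limg_ker_dim g fullv; rewrite capfv dimVL.
have : (\dim (g @: fullv) <= 1)%N by rewrite -dimLo dimvS // subvf.
have : \dim (g @: fullv) != 0%N.
  rewrite dimv_eq0; apply: contra gnz => /eqP g0.
  rewrite eqEsubv subvf /=; apply/subvP => x _.
  by rewrite memv_ker -memv0 -g0 memv_img ?memvf.
lia.
Qed.

Section Side.
Variables (k k' : nat) (U : {vspace VF L k}) (U' : {vspace VF L k'})
  (j : VF L k' -> VF L k) (jL : VL L k' -> VL L k).
Hypotheses (jlin : linear jL) (hj : forall v, toL (j v) = jL (toL v))
  (hjU : forall v, v \in U' -> j v \in U).
Variables (H W' : {vspace VL L k}).
Hypothesis hW : forall v, v \in U /\ toL v \in H -> toL v \in W'.
Variables (f : VL L k -> L^o).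
Hypotheses (flin : linear f) (fH : forall x, (f x == 0) = (x \in H)).

Lemma lin_fj : linear (f \o jL).
Proof. by move=> a u v /=; rewrite jlin flin. Qed.

Definition gj := linfun (f \o jL).

Lemma side : is_Lspan (fun v => v \in U') fullv -> cutting U' ->
  forall x, f (jL x) = 0 -> jL x \in W'.
Proof.
move=> sysU cutU.
have key : forall v, v \in U' -> gj (toL v) = 0 -> toL v \in (linfun jL @^-1: W')%VS.
  move=> v vU g0; rewrite -memv_preim linfunE' // -hj; apply: hW; split; first exact: hjU.
  have g0' : f (jL (toL v)) = 0 by move: g0; rewrite /gj (linfunE' lin_fj).
  by rewrite -fH hj g0'.
case: (eqVneq (lker gj) fullv) => [gz | gnz].
  have sub : (fullv <= linfun jL @^-1: W')%VS.
    apply: sysU.2 => v vU; apply: key => //; apply/eqP; by rewrite -memv_ker gz memvf.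
  move=> x _; move/subvP: sub => /(_ x (memvf x)).
  by rewrite -memv_preim linfunE'.
have hP := hyper gnz.
have sub : (lker gj <= linfun jL @^-1: W')%VS.
  apply: (cutU _ hP).2 => v [vU vP]; apply: key => //; apply/eqP; rewrite -memv_ker //.
move=> x fx; move/subvP: sub => /(_ x); rewrite -memv_preim linfunE' //; apply.
by rewrite memv_ker (linfunE' lin_fj) /= fx.
Qed.

Definition Gj (v : VF L k') : L := f (jL (toL v)).
Lemma lin_Gj : linear Gj.
Proof.
move=> a u v; rewrite /Gj toLD toLZ jlin flin /=.
by rewrite -[in RHS]mulr_algl.
Qed.

Lemma img_bound (n' t' : nat) :
  \dim U' = n' ->
  (forall h : nat, h.+1 = k' -> evasive U' h (n'%:Z - (\dim {:L})%:Z - 1 + t'%:Z)) ->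
  lker gj != fullv ->
  ((\dim {:L})%:Z + 1 - t'%:Z <= (\dim (linfun Gj @: U'))%:Z)%R.
Proof.
move=> dU hev gnz.
have hP := hyper gnz.
have := hev _ hP (lker gj) erefl (U' :&: lker (linfun Gj))%VS (capvSl _ _).
have := limg_ker_dim (linfun Gj) U'.
suff P : forall v, v \in (U' :&: lker (linfun Gj))%VS -> toL v \in lker gj.
  move=> hd /(_ P); rewrite dU in hd; move: (\dim _) (\dim _) (\dim fullv) hd => a b c hd; lia.
move=> v /memv_capP [_]; rewrite !memv_ker (linfunE' lin_Gj) (linfunE' lin_fj). by [].
Qed.

End Side.

End Aux.
Section LinGen.
Variables (K : fieldType) (aT rT : vectType K) (f : aT -> rT).
Hypothesis lf : linear f.
Lemma linD' u v : f (u + v) = f u + f v.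
Proof. by rewrite -!(linfunE' lf) linearD. Qed.
Lemma linB' u v : f (u - v) = f u - f v.
Proof. by rewrite -!(linfunE' lf) linearB. Qed.
Lemma linZ' a u : f (a *: u) = a *: f u.
Proof. by rewrite -!(linfunE' lf) linearZ. Qed.
End LinGen.

Lemma scaleLo (F : finFieldType) (L : fieldExtType F) (p : L) (q : L^o) : p *: q = p * q.
Proof. by []. Qed.

Theorem proposition3p8 (F : finFieldType) (L : fieldExtType F)
  (k1 k2 n1 n2 t1 t2 : nat)
  (U1 : {vspace VF L k1}) (U2 : {vspace VF L k2}) :
  is_system n1 U1 -> cutting U1 ->
  (forall h : nat, h.+1 = k1 ->
     evasive U1 h (n1%:Z - (\dim {:L})%:Z - 1 + t1%:Z)) ->
  is_system n2 U2 -> cutting U2 ->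
  (forall h : nat, h.+1 = k2 ->
     evasive U2 h (n2%:Z - (\dim {:L})%:Z - 1 + t2%:Z)) ->
  (t1 + t2 < \dim {:L} + 2)%N ->
  is_system (n1 + n2)%N (dsum U1 U2) /\ cutting (dsum U1 U2).
Proof.
move=> [dU1 sp1] cut1 ev1 [dU2 sp2] cut2 ev2 ht.
have hl : forall u, u \in U1 -> inl_vec k2 u \in dsum U1 U2.
  move=> u h; apply: (subvP (addvSl _ _)).
  rewrite -(linfunE' (@lin_inl _ _ k1 k2)); exact: memv_img.
have hr : forall u, u \in U2 -> inr_vec k1 u \in dsum U1 U2.
  move=> u h; apply: (subvP (addvSr _ _)).
  rewrite -(linfunE' (@lin_inr _ _ k1 k2)); exact: memv_img.
split.
  split.
    rewrite /dsum dimv_disjoint_sum.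
      rewrite !limg_dim_eq ?dU1 ?dU2 //.
        apply/eqP; rewrite -subv0; apply/subvP => x /memv_capP [_].
        rewrite memv_ker memv0 (linfunE' (@lin_inr _ _ k1 k2)) => /eqP e.
        apply/eqP/ffunP => i; have := congr1 (fun w : VF L (k1 + k2) => w (rshift k1 i)) e.
        by rewrite /= inr_rshift ffunE => ->; rewrite ffunE.
      apply/eqP; rewrite -subv0; apply/subvP => x /memv_capP [_].
      rewrite memv_ker memv0 (linfunE' (@lin_inl _ _ k1 k2)) => /eqP e.
      apply/eqP/ffunP => i; have := congr1 (fun w : VF L (k1 + k2) => w (lshift k2 i)) e.
      by rewrite /= inl_lshift ffunE => ->; rewrite ffunE.
    apply/eqP; rewrite -subv0; apply/subvP => x /memv_capP [/memv_imgP [u1 _ ->]].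
    move=> /memv_imgP [u2 _ e]; rewrite memv0.
    move: e; rewrite (linfunE' (@lin_inl _ _ k1 k2)) (linfunE' (@lin_inr _ _ k1 k2)) => e.
    apply/eqP/ffunP => i; have := congr1 (fun w : VF L (k1 + k2) => w i) e.
    by rewrite /= !ffunE; case: split.
  split => [v _|W' hW]; first exact: memvf.
  apply/subvP => x _; rewrite (decompL x); apply: memvD.
    have : (fullv <= linfun (inlL (k1:=k1) k2) @^-1: W')%VS.
      apply: sp1.2 => v vU; rewrite -memv_preim (linfunE' (@lin_inlL _ _ k1 k2)) -toL_inl.
      by apply: hW; apply: hl.
    by move/subvP => /(_ _ (memvf (p1 x))); rewrite -memv_preim (linfunE' (@lin_inlL _ _ k1 k2)).
  have : (fullv <= linfun (inrL (k2:=k2) k1) @^-1: W')%VS.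
    apply: sp2.2 => v vU; rewrite -memv_preim (linfunE' (@lin_inrL _ _ k1 k2)) -toL_inr.
    by apply: hW; apply: hr.
  by move/subvP => /(_ _ (memvf (p2 x))); rewrite -memv_preim (linfunE' (@lin_inrL _ _ k1 k2)).
move=> H hH; split => [v [] //|W' hW].
have [f [flin fH]] := functional hH.
have sideL := side (@lin_inlL _ _ k1 k2) (@toL_inl _ _ k1 k2) hl hW flin fH sp1 cut1.
have sideR := side (@lin_inrL _ _ k1 k2) (@toL_inr _ _ k1 k2) hr hW flin fH sp2 cut2.
apply/subvP => h hH'.
have fh : f h = 0 by apply/eqP; rewrite fH.
rewrite (decompL h); set x1 := p1 h; set x2 := p2 h.
have fdec : f (inlL k2 x1) + f (inrL k1 x2) = 0 by rewrite -(linD' flin) -decompL.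
have fLz : forall x, lker (gj (inlL (k1:=k1) k2) f) = fullv -> f (inlL k2 x) = 0.
  move=> x gz; apply/eqP; have : x \in lker (gj (inlL (k1:=k1) k2) f) by rewrite gz memvf.
  by rewrite memv_ker /gj (linfunE' (lin_fj (@lin_inlL _ _ k1 k2) flin)).
have fRz : forall x, lker (gj (inrL (k2:=k2) k1) f) = fullv -> f (inrL k1 x) = 0.
  move=> x gz; apply/eqP; have : x \in lker (gj (inrL (k2:=k2) k1) f) by rewrite gz memvf.
  by rewrite memv_ker /gj (linfunE' (lin_fj (@lin_inrL _ _ k1 k2) flin)).
case: (eqVneq (lker (gj (inlL (k1:=k1) k2) f)) fullv) => [gzL|gnzL].
  have f1 := fLz x1 gzL.
  apply: memvD; first exact: sideL.
  by apply: sideR; rewrite -fdec f1 add0r.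
case: (eqVneq (lker (gj (inrL (k2:=k2) k1) f)) fullv) => [gzR|gnzR].
  have f2 := fRz x2 gzR.
  apply: memvD; last exact: sideR.
  by apply: sideL; rewrite -fdec f2 addr0.
have b1 := img_bound (@lin_inlL _ _ k1 k2) flin dU1 ev1 gnzL.
have b2 := img_bound (@lin_inrL _ _ k1 k2) flin dU2 ev2 gnzR.
set I1 := (linfun (Gj (inlL (k1:=k1) k2) f) @: U1)%VS in b1.
set I2 := (linfun (Gj (inrL (k2:=k2) k1) f) @: U2)%VS in b2.
have dsc := dimv_sum_cap I1 I2.
have dsm : (\dim (I1 + I2) <= \dim {:L})%N by apply: dimvS; apply: subvf.
have : (\dim (I1 :&: I2) != 0)%N.
  move: (\dim (I1 :&: I2)) (\dim (I1 + I2)) (\dim I1) (\dim I2) (\dim {:L}) dsc dsm b1 b2 ht.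
  move=> a b c d e; lia.
rewrite dimv_eq0 -vpick0; set a := vpick _ => a0.
have := memv_pick (I1 :&: I2)%VS; rewrite -/a => /memv_capP [].
move=> /memv_imgP [u1 u1U ea1] /memv_imgP [u2 u2U ea2].
rewrite (linfunE' (lin_Gj (@lin_inlL _ _ k1 k2) flin)) /Gj in ea1.
rewrite (linfunE' (lin_Gj (@lin_inrL _ _ k1 k2) flin)) /Gj in ea2.
set w := inl_vec k2 u1 - inr_vec k1 u2.
have wW : toL w \in W'.
  apply: hW; split; first by rewrite memvB ?hl ?hr.
  by rewrite -fH /w toLB toL_inl toL_inr (linB' flin) -ea1 -ea2 subrr.
set c := f (inlL k2 x1) / a.
set y1 := x1 - c *: toL u1.
set y2 := x2 + c *: toL u2.
have fy1 : f (inlL k2 y1) = 0.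
  rewrite /y1 (linB' (@lin_inlL _ _ k1 k2)) (linZ' (@lin_inlL _ _ k1 k2)).
  by rewrite (linB' flin) (linZ' flin) -ea1 /c /= scaleLo divfK // subrr.
have fy2 : f (inrL k1 y2) = 0.
  rewrite /y2 (linD' (@lin_inrL _ _ k1 k2)) (linZ' (@lin_inrL _ _ k1 k2)).
  rewrite (linD' flin) (linZ' flin) -ea2 /c /= scaleLo divfK // addrC.
  exact: fdec.
have -> : inlL k2 x1 + inrL k1 x2 = inlL k2 y1 + inrL k1 y2 + c *: toL w.
  rewrite /y1 /y2 (linB' (@lin_inlL _ _ k1 k2)) (linZ' (@lin_inlL _ _ k1 k2)).
  rewrite (linD' (@lin_inrL _ _ k1 k2)) (linZ' (@lin_inrL _ _ k1 k2)).
  rewrite /w toLB toL_inl toL_inr scalerBr.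
  move: (inlL k2 x1) (inrL k1 x2) (c *: inlL k2 (toL u1)) (c *: inrL k1 (toL u2)).
  move=> A B P Q.
  by rewrite -addrA (addrACA B) subrr addr0 (addrACA A) addNr addr0.
apply: memvD; last exact: memvZ.
apply: memvD; [exact: sideL | exact: sideR].
Qed.
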